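(* Let $w_1,w_2,\dots\in F$ be arbitrary, set $w_0=1$, and define $a_0=1,a_1,a_2,\dots$ by $\sum_{n\ge0}a_nz^n=\bigl(\sum_{n\ge0}w_nz^n\bigr)^{-1}$. Then \[ \sum_{L}w_L\,\mathbf r_L=\Bigl(\sum_{n\ge0}a_n\mathbf h_n\Bigr)^{-1}, \] where the sum is over all compositions $L$ (including the empty one, with $\mathbf r_\emptyset=1$) and $w_L=w_{L_1}\cdots w_{L_k}$ for $L=(L_1,\dots,L_k)$.
   Context: $F$ is a field of characteristic $0$. In $F\langle\langle X_1,X_2,\dots\rangle\rangle$ (noncommuting variables), $\mathbf h_n=\sum_{i_1\le\cdots\le i_n}X_{i_1}\cdots X_{i_n}$ ($\mathbf h_0=1$). For a composition $L=(L_1,\dots,L_k)$ of $n$, $\mathbf r_L=\sum X_{i_1}\cdots X_{i_n}$ over $(i_1,\dots,i_n)$ with $i_1\le\cdots\le i_{L_1}>i_{L_1+1}\le\cdots\le i_{L_1+L_2}>\cdots>i_{L_1+\cdots+L_{k-1}+1}\le\cdots\le i_n$. *)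

(* Defs.v *)
From HB Require Import structures.
From mathcomp Require Import all_boot all_order all_algebra.
Set Implicit Arguments. Unset Strict Implicit. Unset Printing Implicit Defensive.
Import Order.TTheory GRing.Theory Num.Theory.
Local Open Scope ring_scope.

(* Noncommutative formal power series over F in the variables X_0, X_1, ...
   (variable X_i of the paper is our letter i-1; only the order of the
   letters matters).  A word X_{i1}...X_{in} is the sequence [:: i1; ...; in];
   a series is its coefficient function on words. *)
Definition ncs (F : Type) := seq nat -> F.

Definition ncone (F : nzRingType) : ncs F := fun u => (u == [::])%:R.

Definition ncmul (F : nzRingType) (f g : ncs F) : ncs F :=
  fun u => \sum_(i < (size u).+1) f (take i u) * g (drop i u).

Definition hser (F : nzRingType) (n : nat) : ncs F :=
  fun u => ((size u == n) && sorted leq u)%:R.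

Definition partsums (L : seq nat) : seq nat :=
  [seq sumn (take i L) | i <- iota 1 (size L).-1].

(* r_L : sum of words of length |L| with weak ascents inside blocks
   and strict descents exactly at the block boundaries. *)
Definition rser (F : nzRingType) (L : seq nat) : ncs F :=
  fun u => ((size u == sumn L) &&
     [forall j : 'I_(size u),
        (0 < j)%N ==>
        (if (j : nat) \in partsums L then (nth 0%N u j < nth 0%N u j.-1)%N
         else (nth 0%N u j.-1 <= nth 0%N u j)%N)])%:R.

Definition is_composition (n : nat) (L : seq nat) : bool :=
  (sumn L == n) && all (fun x => 0 < x)%N L.

Fixpoint seqs_upto (k n : nat) : seq (seq nat) :=
  match k with
  | 0 => [:: [::]]
  | k'.+1 => [::] :: [seq x :: s | x <- iota 0 n.+1, s <- seqs_upto k' n]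
  end.

Definition compositions (n : nat) : seq (seq nat) :=
  undup [seq L <- seqs_upto n n | is_composition n L].

Definition wL (F : nzRingType) (w : nat -> F) (L : seq nat) : F :=
  \prod_(x <- L) w x.

(* sum_L w_L r_L over all compositions L; on a word u only the compositions
   of size u contribute, since r_L has coefficient 0 on u otherwise. *)
Definition sum_wr (F : nzRingType) (w : nat -> F) : ncs F :=
  fun u => \sum_(L <- compositions (size u)) wL w L * rser F L u.

(* sum_n a_n h_n; on u only n = size u contributes. *)
Definition sum_ah (F : nzRingType) (a : nat -> F) : ncs F :=
  fun u => \sum_(n < (size u).+1) a n * hser F n u.

(* Main.v *)
Require Import Defs.
From HB Require Import structures.
From mathcomp Require Import all_boot all_order all_algebra.
From mathcomp Require Import zify.
From Stdlib Require Import FunctionalExtensionality.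
Import GRing.Theory.
Local Open Scope ring_scope.



Definition incr_head (L : seq nat) : seq nat :=
  if L is k :: L' then k.+1 :: L' else [:: 1%N].

Fixpoint incr_last (L : seq nat) : seq nat :=
  match L with
  | [::] => [:: 1%N]
  | k :: L' => if L' is [::] then [:: k.+1] else k :: incr_last L'
  end.

Fixpoint Dc (u : seq nat) : seq nat :=
  match u with
  | [::] => [::]
  | x :: s => match s with
              | [::] => [:: 1%N]
              | y :: _ => if (y < x)%N then 1%N :: Dc s else incr_head (Dc s)
              end
  end.

Lemma Dc_cons2 x y s : Dc [:: x, y & s] =
  if (y < x)%N then 1%N :: Dc (y :: s) else incr_head (Dc (y :: s)).
Proof. by []. Qed.

Lemma Dc_cons (u : seq nat) : u != [::] -> exists m L, Dc u = m :: L.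
Proof.
case: u => [|x [|y s]] // _; first by exists 1%N, [::].
rewrite Dc_cons2; case: ifP => _; first by exists 1%N, (Dc (y :: s)).
case: (Dc (y :: s)) => [|k L] /=; first by exists 1%N, [::].
by exists k.+1, L.
Qed.

Lemma Dc_comp u : is_composition (size u) (Dc u).
Proof.
elim: u => [|x s IH] //.
case: s IH => [|y s] IH //.
move: IH; rewrite /is_composition Dc_cons2.
case: (Dc (y :: s)) => [|k L] /andP[/eqP Hs Hp]; case: ifP => _ /=.
- by move: Hs.
- by move: Hs.
- by move: Hs Hp => /= -> ->; rewrite add1n eqxx.
- by move: Hs Hp => /= <- /andP[_ ->]; rewrite addSn eqxx.
Qed.

Lemma incr_last_rcons L k : incr_last (rcons L k) = rcons L k.+1.
Proof.
elim: L => [|a L IH] //=.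
by case: L IH => [|b L] //= ->.
Qed.

Lemma Dc_rcons (u : seq nat) (z : nat) : u != [::] ->
  Dc (rcons u z) = if (z < last 0%N u)%N then rcons (Dc u) 1%N
                   else incr_last (Dc u).
Proof.
case: u => [|x s] // _.
elim: s x => [|y s IH] x; first by rewrite /=; case: ifP.
have -> : rcons [:: x, y & s] z = [:: x, y & rcons s z] by [].
rewrite !Dc_cons2 -rcons_cons IH.
have -> : last 0%N [:: x, y & s] = last 0%N (y :: s) by [].
have [m [L ->]] := Dc_cons (y :: s) isT.
case: ifP => _; case: ifP => _ //=.
by case: L.
Qed.

Lemma sorted_rcons_le (p : seq nat) z : (last 0%N p <= z)%N ->
  sorted leq (rcons p z) = sorted leq p.
Proof. by case: p => [|a p] //= H; rewrite rcons_path H andbT. Qed.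

Lemma sorted_rcons_lt (p : seq nat) z : p != [::] -> (z < last 0%N p)%N ->
  sorted leq (rcons p z) = false.
Proof.
case: p => [|a p] //= _ H; rewrite rcons_path.
by rewrite leqNgt H andbF.
Qed.

Lemma last_drop (u : seq nat) i : (i < size u)%N -> last 0%N (drop i u) = last 0%N u.
Proof.
move=> Hi; rewrite -!nth_last nth_drop size_drop; congr nth; lia.
Qed.

Lemma run_back (u : seq nat) : u != [::] -> exists L m, Dc u = rcons L m /\ (m <= size u)%N /\
  (forall i, (i <= size u)%N -> sorted leq (drop i u) = (size u - m <= i)%N) /\
  (forall i, (size u - m <= i <= size u)%N ->
     Dc (take i u) = if i == (size u - m)%N then L else rcons L (i - (size u - m))%N).
Proof.
elim/last_ind: u => [|u0 z IH] // _.
have [->|Hu0] := eqVneq u0 [::].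
  exists [::], 1%N; split => //; split => //; split.
    by move=> i _; case: i.
  by case=> [|[|i]] //=.
have {IH} [L0 [m0 [HD [Hm [Hs Ht]]]]] := IH Hu0.
rewrite Dc_rcons // size_rcons.
have Hsz : (0 < size u0)%N by rewrite lt0n size_eq0.
case: ifP => Hz.
  exists (Dc u0), 1%N; split => //; split => //; split.
    move=> i Hi; rewrite subn1 /=.
    have [Hi'|Hi'] := ltnP i (size u0).
      rewrite drop_rcons ?(ltnW Hi') // sorted_rcons_lt //.
        by rewrite -size_eq0 size_drop subn_eq0 -ltnNge.
      by rewrite last_drop.
    have [->|Hne] := eqVneq i (size u0).
      by rewrite drop_rcons // drop_size.
    by rewrite drop_oversize // size_rcons ltn_neqAle eq_sym Hne Hi'.
  move=> i; rewrite subn1 /= => /andP[H1 H2].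
  have [->|Hne] := eqVneq i (size u0).
    by rewrite -cats1 takel_cat // take_size.
  have -> : i = (size u0).+1 by lia.
  by rewrite take_oversize ?size_rcons // Dc_rcons // Hz subSnn.
exists L0, m0.+1; rewrite HD incr_last_rcons; split => //; split; first by lia.
split.
  move=> i Hi; rewrite subSS.
  have [Hi'|Hi'] := ltnP i (size u0).
    rewrite drop_rcons ?(ltnW Hi') // sorted_rcons_le ?Hs ?(ltnW Hi') //.
    by rewrite last_drop // leqNgt Hz.
  rewrite (_ : (size u0 - m0 <= i)%N = true); last by lia.
  have [->|Hne] := eqVneq i (size u0); first by rewrite drop_rcons // drop_size.
  by rewrite drop_oversize // size_rcons ltn_neqAle eq_sym Hne Hi'.
move=> i; rewrite subSS => /andP[H1 H2].
have [Hi'|Hi'] := leqP i (size u0).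
  rewrite -cats1 takel_cat // Ht //; apply/andP; split => //.
have -> : i = (size u0).+1 by lia.
rewrite take_oversize ?size_rcons // Dc_rcons // Hz HD incr_last_rcons.
have -> : ((size u0).+1 == size u0 - m0)%N = false by lia.
congr rcons; lia.
Qed.

Lemma run_front (u : seq nat) : u != [::] -> exists m L, Dc u = m :: L /\ (m <= size u)%N /\
  (forall i, (i <= size u)%N -> sorted leq (take i u) = (i <= m)%N) /\
  (forall i, (i <= m)%N -> Dc (drop i u) = if i == m then L else (m - i)%N :: L).
Proof.
elim: u => [|x s IH] // _.
case: s IH => [|y s] IH.
  exists 1%N, [::]; split => //; split => //; split.
    by case=> [|[|i]].
  by case=> [|[|i]].
have {IH} [m [L [HD [Hm [Hs Ht]]]]] := IH isT.
rewrite Dc_cons2 HD.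
case: ifP => Hyx.
  exists 1%N, (m :: L); split => //; split => //; split.
    case=> [|[|i]] // _.
    by rewrite [take _ _]/= /= leqNgt Hyx.
  case=> [|[|i]] // _.
    by rewrite drop0 Dc_cons2 Hyx HD.
exists m.+1, L; split => //; split; first by move: Hm => /=; lia.
split.
  case=> [|[|j]] // Hj.
  move: (Hs j.+1) => H; rewrite ltnS -H; last by move: Hj => /=; lia.
  by rewrite /= leqNgt Hyx.
case=> [|j] Hj; first by rewrite drop0 Dc_cons2 Hyx HD subn0.
by rewrite [drop _ _]/= Ht // subSS.
Qed.



Definition condS (L u : seq nat) : bool :=
  all (fun j => (j.+1 \in partsums L) == (nth 0%N u j.+1 < nth 0%N u j)%N)
      (iota 0 (size u).-1).

Lemma rserE (F : nzRingType) (L u : seq nat) :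
  rser F L u = ((size u == sumn L) && condS L u)%:R.
Proof.
rewrite /rser /condS; congr (_ %:R); congr (_ && _).
apply/forallP/allP.
  move=> H j; rewrite mem_iota add0n => /andP[_ Hj].
  have Hj' : (j.+1 < size u)%N by lia.
  move: (H (Ordinal Hj')) => /=.
  case: (j.+1 \in partsums L) => /=; first by move=> ->.
  by rewrite leqNgt; case: (_ < _)%N.
move=> H [[|j] Hj] //=.
move: (H j); rewrite mem_iota add0n => /(_ (ltac:(apply/andP; split; lia))).
case: (j.+1 \in partsums L) => /=; first by move/eqP <-.
by move=> /eqP H'; rewrite leqNgt -H'.
Qed.

Lemma mem_ps_cons (k : nat) (L' : seq nat) (j : nat) : (j \in partsums (k :: L')) =
  has (fun i => j == k + sumn (take i L'))%N (iota 0 (size L')).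
Proof.
rewrite /partsums /= -[1%N]/(1 + 0)%N iotaDl -map_comp.
apply/mapP/hasP => [[i Hi ->]|[i Hi /eqP ->]]; exists i => //=.
Qed.

Lemma one_ps (k : nat) (L' : seq nat) : (0 < k)%N -> (k == 1%N -> L' != [::]) ->
  (1%N \in partsums (k :: L')) = (k == 1%N).
Proof.
move=> Hk HL; rewrite mem_ps_cons.
have [E|E] := eqVneq k 1%N.
  move: (HL (introT eqP E)); rewrite E; case: L' {HL} => // a L' _ /=.
apply/hasP => [[i _ /eqP]]; move/eqP: E; lia.
Qed.

Lemma shift_ps (k : nat) (L' : seq nat) (j : nat) : (0 < k)%N ->
  (j.+2 \in partsums (k :: L')) =
  (j.+1 \in partsums (if k == 1%N then L' else k.-1 :: L')).
Proof.
move=> Hk; have [E|E] := eqVneq k 1%N.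
  rewrite mem_ps_cons E.
  case: L' => [|a L'] //.
  rewrite mem_ps_cons /=.
  rewrite -[1%N]/(1 + 0)%N iotaDl has_map.
  apply/eq_has => i /=; rewrite add1n /=.
  by rewrite add0n; apply/eqP/eqP; lia.
rewrite !mem_ps_cons; apply/eq_has => i /=.
apply/eqP/eqP; move/eqP: E; lia.
Qed.

Lemma condS_cons2 (x y : nat) (s : seq nat) (k : nat) (L' : seq nat) : (0 < k)%N -> (k == 1%N -> L' != [::]) ->
  condS (k :: L') [:: x, y & s] =
  ((k == 1%N) == (y < x)%N) &&
  condS (if k == 1%N then L' else k.-1 :: L') (y :: s).
Proof.
move=> Hk HL; rewrite /condS /= one_ps //; congr (_ && _).
rewrite -[1%N]/(1 + 0)%N iotaDl all_map; apply/eq_all => j /=.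
by rewrite add1n shift_ps.
Qed.

Lemma comp_nil (L : seq nat) : all (fun x => 0 < x)%N L -> sumn L = 0%N -> L = [::].
Proof. by case: L => [|a L] //= /andP[Ha _]; lia. Qed.

Lemma rb_D (u L : seq nat) : is_composition (size u) L ->
  ((size u == sumn L) && condS L u) = (L == Dc u).
Proof.
elim: u L => [|x s IH] L.
  by rewrite /is_composition => /andP[/eqP H1 H2]; rewrite (@comp_nil L H2 H1).
case: s IH => [|y s] IH HL.
  move: HL; rewrite /is_composition => /andP[/eqP H1 H2].
  case: L H1 H2 => [|k L] //= H1 /andP[H2 H3].
  have Hk : k = 1%N by lia.
  have HL : L = [::] by apply: comp_nil => //; lia.
  by rewrite Hk HL.
move: HL; rewrite /is_composition => /andP[/eqP H1 H2].
case: L H1 H2 => [|k L] // H1 /andP[Hk H3].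
rewrite [sumn _]/= [size _]/= in H1.
have {}H3 : all (fun x => 0 < x)%N L := H3.
have HL1 : k == 1%N -> L != [::].
  by move=> /eqP Ek; apply/eqP => EL; move: H1; rewrite Ek EL.
rewrite condS_cons2 // (_ : (size [:: x, y & s] == k + sumn L)%N = true); last by apply/eqP.
set Lm := if k == 1%N then L else k.-1 :: L.
have HLm : is_composition (size (y :: s)) Lm.
  rewrite /is_composition /Lm; have [Ek|Ek] := eqVneq k 1%N; rewrite /=.
    by rewrite H3 andbT; apply/eqP; move: H1 => /=; lia.
  by rewrite H3 andbT; apply/andP; split; [apply/eqP; move: H1 => /=; lia| lia].
have := IH Lm HLm.
rewrite (_ : (size (y :: s) == sumn Lm) = true); last by move: HLm => /andP[/eqP -> _]; rewrite eqxx.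
rewrite !andTb => ->.
rewrite Dc_cons2.
have := Dc_comp (y :: s).
have [m [M ->]] := Dc_cons (y :: s) isT.
move=> /andP[_ /= /andP[Hm _]].
rewrite /Lm; have [->|Ek] := eqVneq k 1%N; rewrite ?eqxx.
  case: (y < x)%N; rewrite /= ?eqseq_cons ?eqxx //.
  by case: m Hm.
case: (y < x)%N; rewrite /= !eqseq_cons ?(negbTE Ek) //.
congr (_ && _); by apply/eqP/eqP; move/eqP: Ek; lia.
Qed.



Lemma size_le_sumn (L : seq nat) : all (fun x => 0 < x)%N L -> (size L <= sumn L)%N.
Proof. elim: L => [|a L IH] //= /andP[Ha HL]; have := IH HL; lia. Qed.

Lemma all_le_sumn (L : seq nat) : all (fun x => x <= sumn L)%N L.
Proof.
elim: L => [|a L IH] //=; rewrite leq_addr /=.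
by apply: sub_all IH => x /= H; lia.
Qed.

Lemma seqs_upto_mem k n (L : seq nat) : (size L <= k)%N ->
  all (fun x => x <= n)%N L -> L \in seqs_upto k n.
Proof.
elim: k L => [|k IH] [|x L] // Hs Ha; try by rewrite inE.
rewrite [seqs_upto _ _]/seqs_upto -/seqs_upto in_cons; apply/orP; right.
move: Ha => /andP[Hx HL].
apply/allpairsP; exists (x, L); split => //; first by rewrite mem_iota add0n ltnS Hx.
by apply: IH.
Qed.

Lemma comp_mem n (L : seq nat) : is_composition n L -> L \in compositions n.
Proof.
move=> H; rewrite /compositions mem_undup mem_filter H /=.
move: H => /andP[/eqP <- Hp]; apply: seqs_upto_mem; first exact: size_le_sumn.
exact: all_le_sumn.
Qed.

Lemma W_D (F : nzRingType) (w : nat -> F) (u : seq nat) :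
  sum_wr w u = wL w (Dc u).
Proof.
rewrite /sum_wr (bigD1_seq (Dc u)) /=; last exact: undup_uniq.
  rewrite rserE rb_D ?Dc_comp // eqxx mulr1 big1_seq ?addr0 // => L /andP[HL Hin].
  move: Hin; rewrite mem_undup mem_filter => /andP[Hc _].
  by rewrite rserE rb_D // (negbTE HL) mulr0.
by apply: comp_mem; apply: Dc_comp.
Qed.

Lemma sum_ahE (F : nzRingType) (a : nat -> F) (v : seq nat) :
  sum_ah a v = a (size v) * (sorted leq v)%:R.
Proof.
rewrite /sum_ah big_ord_recr /= big1 ?add0r.
  by rewrite /hser eqxx.
move=> i _; rewrite /hser.
have -> : (size v == i)%N = false by apply/negbTE; rewrite neq_ltn ltn_ord orbT.
by rewrite mulr0.
Qed.

Lemma wL_cons (F : nzRingType) (w : nat -> F) k L : wL w (k :: L) = w k * wL w L.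
Proof. by rewrite /wL big_cons. Qed.

Lemma wL_rcons (F : nzRingType) (w : nat -> F) k L : wL w (rcons L k) = wL w L * w k.
Proof. by rewrite /wL -cats1 big_cat big_seq1. Qed.



Theorem theorem11 (F : fieldType) (charF0 : [pchar F] =i pred0)
  (w a : nat -> F) (hw0 : w 0%N = 1)
  (ha : forall n : nat,
     \sum_(k < n.+1) w k * a (n - k)%N = (n == 0%N)%:R) :
  ncmul (sum_wr w) (sum_ah a) = ncone F /\
  ncmul (sum_ah a) (sum_wr w) = ncone F.
Proof.
have a0 : a 0%N = 1.
  by move: (ha 0%N); rewrite big_ord1 /= hw0 mul1r.
have hm : forall m, (0 < m)%N -> \sum_(k < m.+1) w k * a (m - k)%N = 0.
  by move=> m Hm; rewrite ha; case: m Hm.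
split; apply: functional_extensionality => u; rewrite /ncmul /ncone.
- have [->|Hu] := eqVneq u [::].
    by rewrite big_ord1 /= W_D sum_ahE /= /wL big_nil a0 !mul1r.
  rewrite (_ : false%:R = 0) //.
  have [L [m [HD [Hm [Hs Ht]]]]] := run_back u Hu.
  have Hm0 : (0 < m)%N.
    by have := Dc_comp u; rewrite HD /is_composition all_rcons => /andP[_ /andP[]].
  under eq_bigr => i _ do rewrite W_D sum_ahE.
  set p := (size u - m)%N.
  rewrite (_ : (size u).+1 = p + m.+1)%N; last by rewrite /p; lia.
  rewrite big_split_ord /= big1 ?add0r.
    rewrite (eq_bigr (fun j : 'I_m.+1 => wL w L * (w j * a (m - j)%N))).
      by rewrite -mulr_sumr hm // mulr0.
    move=> [j Hj] _ /=.
    rewrite Ht; last by rewrite /p; lia.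
    rewrite Hs; last by rewrite /p; lia.
    rewrite leq_addr mulr1 size_drop (_ : (size u - (p + j) = m - j)%N); last by rewrite /p; lia.
    case: j Hj => [|j] Hj.
      by rewrite addn0 eqxx hw0 mul1r.
    rewrite (_ : (p + j.+1 == p) = false); last by lia.
    by rewrite wL_rcons (_ : (p + j.+1 - p = j.+1)%N) ?mulrA //; lia.
  move=> [i Hi] _ /=.
  rewrite Hs; last by rewrite /p in Hi *; lia.
  by rewrite (_ : (p <= i)%N = false) ?mulr0 //; lia.
- have [->|Hu] := eqVneq u [::].
    by rewrite big_ord1 /= W_D sum_ahE /= /wL big_nil a0 !mul1r.
  rewrite (_ : false%:R = 0) //.
  have [m [L [HD [Hm [Hs Ht]]]]] := run_front u Hu.
  have Hm0 : (0 < m)%N.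
    by have := Dc_comp u; rewrite HD /is_composition /= => /andP[_ /andP[]].
  under eq_bigr => i _ do rewrite W_D sum_ahE.
  rewrite (_ : (size u).+1 = m.+1 + (size u - m))%N; last by lia.
  rewrite big_split_ord /= [X in _ + X]big1 ?addr0.
    rewrite (eq_bigr (fun j : 'I_m.+1 => (w (m - j)%N * a j) * wL w L)).
      rewrite -mulr_suml (reindex_inj rev_ord_inj) /=.
      rewrite (eq_bigr (fun k : 'I_m.+1 => w k * a (m - k)%N)).
        by rewrite hm // mul0r.
      move=> [k Hk] _ /=; rewrite subSS subKn // -ltnS.
    move=> [j Hj] _ /=.
    rewrite Ht; last by lia.
    rewrite Hs; last by lia.
    rewrite (_ : (j <= m)%N = true); last by lia.
    rewrite mulr1 size_takel; last by lia.
    have [Ej|Ej] := eqVneq j m.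
      by rewrite Ej subnn hw0 mul1r mulrC.
    by rewrite wL_cons mulrA [a j * _]mulrC.
  move=> [i Hi] _ /=.
  rewrite Hs; last by lia.
  by rewrite (_ : (m.+1 + i <= m)%N = false) ?mulr0 ?mul0r //; lia.
Qed.
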